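(* Let $I$ be a non-degenerate interval, $f:I\to\mathbb{R}$ continuous and $y\in I$. (i) If $y$ is not an $\mathsf{M}$-point of $f$, then either $\overline{D}^+f(y)=+\infty$ and $\underline{D}^-f(y)=-\infty$, or $\overline{D}^-f(y)=+\infty$ and $\underline{D}^+f(y)=-\infty$. (ii) If $\underline{D}^-f(y)=-\infty$ and $\underline{D}^+_{ap}f(y)=+\infty$, then $y$ is not an $\mathsf{M}$-point of $f$.
   Context: $\overline{D}^+f(y)=\limsup_{t\to y+}\frac{f(t)-f(y)}{t-y}$, and $\underline{D}^+,\overline{D}^-,\underline{D}^-$ are the other Dini derivatives. The approximate lower right Dini derivative is $\underline{D}^+_{ap}f(y)=\sup\{t:\lim_{\delta\to0+}\delta^{-1}\lambda(\{s\in(y,y+\delta):\frac{f(s)-f(y)}{s-y}\ge t\})=1\}$ ($\lambda$ Lebesgue measure). With $\psi(x)=(x,f(x))$, $y$ is an $\mathsf{M}$-point of $f$ if there are $c\ge1$ and $\varepsilon>0$ with $|\psi(x)-\psi(y)|\le c|\psi(x)-\psi(z)|$ for all $x\in I\cap(y-\varepsilon,y)$, $z\in I\cap(y,y+\varepsilon)$. *)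

(* Defs.v *)
From HB Require Import structures.
From mathcomp Require Import all_boot all_order all_algebra.
From mathcomp Require Import all_classical all_reals all_analysis.
Set Implicit Arguments. Unset Strict Implicit. Unset Printing Implicit Defensive.
Import Order.TTheory GRing.Theory Num.Theory.
Import numFieldNormedType.Exports.
Local Open Scope classical_set_scope.
Local Open Scope ring_scope.

Section Dini.
Variable R : realType.
Implicit Types (I : set R) (f : R -> R) (y : R).

Definition dq f y (t : R) : R := (f t - f y) / (t - y).

Definition rnbh I y (d : R) : set R := I `&` [set t | y < t < y + d].
Definition lnbh I y (d : R) : set R := I `&` [set t | y - d < t < y].

(* Dini derivatives (relative to the domain I), as limsup/liminf in \bar R:
   limsup_{t->y+} g t = inf_{d>0} sup_{t in (y,y+d)} g t, etc.
   (sup of the empty set is -oo, inf of the empty set is +oo) *)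
Definition dini_upper_right I f y : \bar R :=
  ereal_inf [set ereal_sup [set (dq f y t)%:E | t in rnbh I y d] | d in [set d : R | 0 < d]].
Definition dini_lower_right I f y : \bar R :=
  ereal_sup [set ereal_inf [set (dq f y t)%:E | t in rnbh I y d] | d in [set d : R | 0 < d]].
Definition dini_upper_left I f y : \bar R :=
  ereal_inf [set ereal_sup [set (dq f y t)%:E | t in lnbh I y d] | d in [set d : R | 0 < d]].
Definition dini_lower_left I f y : \bar R :=
  ereal_sup [set ereal_inf [set (dq f y t)%:E | t in lnbh I y d] | d in [set d : R | 0 < d]].

Definition dini_lower_right_ap I f y : \bar R :=
  ereal_sup [set t%:E | t in
    [set t : R | (fun d : R => ((d^-1)%:E *
        (@lebesgue_measure R) [set s | rnbh I y d s /\ (t <= dq f y s)%R])%E)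
       @ 0^'+ --> 1%E]].

(* Euclidean distance in R^2 between psi(a) = (a, f a) and psi(b) = (b, f b) *)
Definition psidist f (a b : R) : R := Num.sqrt ((a - b) ^+ 2 + (f a - f b) ^+ 2).

Definition Mpoint I f y : Prop :=
  exists c : R, exists eps : R, 1 <= c /\ 0 < eps /\
    forall x z, I x -> y - eps < x < y -> I z -> y < z < y + eps ->
      psidist f x y <= c * psidist f x z.

End Dini.

(* Main.v *)
Require Import Defs.
From HB Require Import structures.
From mathcomp Require Import all_boot all_order all_algebra.
From mathcomp Require Import all_classical all_reals all_analysis.
From mathcomp Require Import lra.
Import Order.TTheory GRing.Theory Num.Theory.
Import numFieldNormedType.Exports.
Local Open Scope classical_set_scope.
Local Open Scope ring_scope.

Lemma core_arith (R : realType) (M u v a b A B : R) : 0<M -> 0<u -> 0<v -> A <= u + `|a| -> u+v <= B -> `|a-b| <= B -> (4*M+4)*B < A -> (0<a /\ M*u < a /\ M*v < b) \/ (a<0 /\ M*u < -a /\ M*v < -b).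
Proof.
move=> M0 u0 v0 hA hB hab hc.
have hcu : (4*M+4)*u + (4*M+4)*v <= (4*M+4)*B by rewrite -mulrDr ler_wpM2l //; lra.
have hcab : (4*M+4)* `|a-b| <= (4*M+4)*B by rewrite ler_wpM2l //; lra.
case: (ltrgt0P a) => ha.
- left. rewrite gtr0_norm // in hA. have := ler_norm (a - b). nra.
- right. rewrite ltr0_norm // in hA. have := ler_norm (b - a). rewrite distrC. nra.
- rewrite ha normr0 in hA. nra.
Qed.

Lemma sqb_le (R : realType) (p q : R) : Num.sqrt (p^+2 + q^+2) <= `|p| + `|q|.
Proof.
rewrite -(@ger0_norm _ (`|p| + `|q|)) ?addr_ge0 // -sqrtr_sqr ler_sqrt ?sqr_ge0 //.
rewrite sqrrD -[p^+2]real_normK ?num_real // -[q^+2]real_normK ?num_real //.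
rewrite lerD2r lerDl mulrn_wge0 // mulr_ge0 //.
Qed.
Lemma sqb_ge1 (R : realType) (p q : R) : `|p| <= Num.sqrt (p^+2 + q^+2).
Proof. rewrite -sqrtr_sqr ler_sqrt ?addr_ge0 ?sqr_ge0 //; have := sqr_ge0 q; lra. Qed.
Lemma sqb_ge2 (R : realType) (p q : R) : `|q| <= Num.sqrt (p^+2 + q^+2).
Proof. rewrite -sqrtr_sqr ler_sqrt ?addr_ge0 ?sqr_ge0 //; have := sqr_ge0 p; lra. Qed.

Lemma near_right (R:realType) (P : R -> Prop): (\forall d \near 0^'+, P d) -> exists2 e : R, 0<e & forall d, 0<d -> d<e -> P d.
Proof.
rewrite near_withinE => /nbhs_ballP [e e0 H]. exists e => // d d0 de.
apply: H => //. rewrite /ball /= sub0r normrN gtr0_norm //.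
Qed.

Lemma near_within_pt (R:realType) (I : set R) y (P : R -> Prop) : (\forall x \near within I (nbhs y), P x) -> exists2 r : R, 0<r & forall x, I x -> `|x - y| < r -> P x.
Proof.
rewrite near_withinE => /nbhs_ballP [e e0 H]. exists e => // x Ix xe.
apply: H => //. by rewrite /ball /= distrC.
Qed.

Lemma cont_pt (R:realType) (I : set R) (f : R -> R) y : {within I, continuous f} -> I y ->
  forall eta, 0 < eta -> exists2 r : R, 0<r & forall x, I x -> `|x - y| < r -> `|f x - f y| < eta.
Proof.
move=> cf Iy eta eta0.
move/cvgrPdist_lt/(_ _ eta0) : (cf y).
rewrite /prop_near1 /nbhs/= -nbhs_subspace_in//.
move=> /near_within_pt [r r0 Hr].
exists r => // x Ix xr. rewrite distrC. exact: Hr.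
Qed.

Lemma dens_half (R : realType) (F : R -> \bar R) : F x @[x --> 0^'+] --> 1%E ->
  exists2 e : R, 0<e & forall d, 0<d -> d<e -> ((1/2)%:E < F d)%E.
Proof.
move/fine_cvgP => [Hfin Hc].
have H2 := cvgr_gt 1 Hc (1/2) ltac:(lra).
have : \forall d \near 0^'+, F d \is a fin_num /\ 1/2 < fine (F d).
  near=> d; split; near: d; [exact: Hfin | exact: H2].
move=> /near_right [e e0 He]; exists e => // d d0 de.
have [fd lt] := He d d0 de. by rewrite -(fineK fd) lte_fin.
Unshelve. all: by end_near.
Qed.

Lemma sup_pinfty (R : realType) (S : set \bar R) :
  (forall M : R, exists2 e, S e & (M%:E < e)%E) -> ereal_sup S = +oo%E.
Proof.
move=> H. case E: (ereal_sup S) => [r| |] //.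
- have [e Se lt] := H r. have := ereal_sup_ubound Se. rewrite E => le.
  by have := lt_le_trans lt le; rewrite ltxx.
- have [e Se lt] := H 0. have := ereal_sup_ubound Se. rewrite E => le.
  by have := lt_le_trans lt le; rewrite ltNge leNye.
Qed.

Lemma inf_ninfty (R : realType) (S : set \bar R) :
  (forall M : R, exists2 e, S e & (e < M%:E)%E) -> ereal_inf S = -oo%E.
Proof.
move=> H. case E: (ereal_inf S) => [r| |] //.
- have [e Se lt] := H r. have := ereal_inf_lbound Se. rewrite E => le.
  by have := le_lt_trans le lt; rewrite ltxx.
- have [e Se lt] := H 0. have := ereal_inf_lbound Se. rewrite E => le.
  by have := le_lt_trans le lt; rewrite ltNge leey.
Qed.

Lemma dini_sup_inf (R : realType) (J : R -> set R) (g : R -> R) :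
  (forall d, 0<d -> forall N, exists2 t, J d t & N < g t) ->
  ereal_inf [set ereal_sup [set (g t)%:E | t in J d] | d in [set d : R | 0 < d]] = +oo%E.
Proof.
move=> H; apply/ereal_inf_pinfty => _ [d d0 <-]. apply: sup_pinfty => N.
have [t Jt lt] := H d d0 N. by exists (g t)%:E; [exists t|rewrite lte_fin].
Qed.

Lemma dini_inf_sup (R : realType) (J : R -> set R) (g : R -> R) :
  (forall d, 0<d -> forall N, exists2 t, J d t & g t < N) ->
  ereal_sup [set ereal_inf [set (g t)%:E | t in J d] | d in [set d : R | 0 < d]] = -oo%E.
Proof.
move=> H; apply/ereal_sup_ninfty => _ [d d0 <-]. apply: inf_ninfty => N.
have [t Jt lt] := H d d0 N. by exists (g t)%:E; [exists t|rewrite lte_fin].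
Qed.

Lemma leb_mono (R : realType) (A B : set R) : A `<=` B ->
  (@lebesgue_measure R A <= lebesgue_measure B)%E.
Proof. move=> AB. rewrite /lebesgue_measure /lebesgue_stieltjes_measure /measure_extension.
exact: le_mu_ext. Qed.

Section P1.
Variable R : realType.
Variables (I : set R) (f : R -> R) (y : R).

Lemma dqL_neg x M : x < y -> M*(y-x) < f x - f y -> dq f y x < -M.
Proof. move=> xy h; rewrite /dq ltr_ndivrMr ?subr_lt0 //; lra. Qed.
Lemma dqL_pos x M : x < y -> M*(y-x) < -(f x - f y) -> M < dq f y x.
Proof. move=> xy h; rewrite /dq ltr_ndivlMr ?subr_lt0 //; lra. Qed.
Lemma dqR_pos z M : y < z -> M*(z-y) < f z - f y -> M < dq f y z.
Proof. move=> yz h; rewrite /dq ltr_pdivlMr ?subr_gt0 //; lra. Qed.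
Lemma dqR_neg z M : y < z -> M*(z-y) < -(f z - f y) -> dq f y z < -M.
Proof. move=> yz h; rewrite /dq ltr_pdivrMr ?subr_gt0 //; lra. Qed.

Definition Pp (s : bool) (d M : R) := exists x z, I x /\ I z /\ y - d < x < y /\ y < z < y + d /\
  (if s then dq f y x < -M /\ M < dq f y z else M < dq f y x /\ dq f y z < -M).

Lemma step1 : ~ Mpoint I f y -> forall d M, 0<d -> 0<M -> Pp true d M \/ Pp false d M.
Proof.
move=> nM d M d0 M0.
case: (pselect (Pp true d M \/ Pp false d M)) => // H; exfalso; apply: nM.
exists (4*M+4), d; split; first lra. split => //.
move=> x z Ix /andP[h1 h2] Iz /andP[h3 h4].
rewrite leNgt; apply/negP => hlt; apply: H.
have hA : psidist f x y <= (y - x) + `|f x - f y|.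
  rewrite /psidist; have := @sqb_le R (x - y) (f x - f y). by rewrite distrC gtr0_norm ?subr_gt0.
have hB : (y - x) + (z - y) <= psidist f x z.
  have := @sqb_ge1 R (x - z) (f x - f z). rewrite distrC gtr0_norm ?subr_gt0; last lra.
  rewrite /psidist. lra.
have hab : `|(f x - f y) - (f z - f y)| <= psidist f x z.
  have -> : (f x - f y) - (f z - f y) = f x - f z by rewrite opprB addrA subrK.
  exact: sqb_ge2.
have [u0 v0] : 0 < y - x /\ 0 < z - y by split; lra.
case: (@core_arith R _ _ _ _ _ _ _ M0 u0 v0 hA hB hab hlt) => [[ha [hu hv]]|[ha [hu hv]]].
- left; exists x, z; do 2 (split => //); split; first (by apply/andP); split; first (by apply/andP).
  split; [exact: dqL_neg | exact: dqR_pos].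
- right; exists x, z; do 2 (split => //); split; first (by apply/andP); split; first (by apply/andP).
  split; [exact: dqL_pos | exact: dqR_neg].
Qed.

Lemma Pp_mono s d M d' M' : Pp s d M -> d <= d' -> M' <= M -> Pp s d' M'.
Proof.
move=> [x [z [Ix [Iz [/andP[h1 h2] [/andP[h3 h4] hs]]]]]] dd MM.
exists x, z; split => //; split => //; split; first (apply/andP; split; lra).
split; first (apply/andP; split; lra).
by case: s hs => -[] ? ?; split; lra.
Qed.

Lemma step2 : ~ Mpoint I f y ->
  (forall d M, 0<d -> 0<M -> Pp true d M) \/ (forall d M, 0<d -> 0<M -> Pp false d M).
Proof.
move=> nM.
case: (pselect (forall d M, 0<d -> 0<M -> Pp true d M)) => H; [by left|right].
have [d0 [M0 [d00 [M00 nP]]]] : exists d0 M0, 0 < d0 /\ 0 < M0 /\ ~ Pp true d0 M0.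
  apply: contrapT => nE; apply: H => d M d0 M0.
  apply: contrapT => nP; apply: nE; by exists d, M.
move=> d M dp Mp.
have dm : 0 < Num.min d d0 by rewrite lt_min dp d00.
have Mm : 0 < Num.max M M0 by rewrite lt_max Mp.
case: (step1 nM _ _ dm Mm) => hP.
- exfalso; apply: nP; apply: (Pp_mono _ _ _ _ _ hP); [by rewrite ge_min lexx orbT | by rewrite le_max lexx orbT].
- apply: (Pp_mono _ _ _ _ _ hP); [by rewrite ge_min lexx | by rewrite le_max lexx].
Qed.

Lemma part1 : ~ Mpoint I f y ->
     (dini_upper_right I f y = +oo%E /\ dini_lower_left I f y = -oo%E) \/
     (dini_upper_left I f y = +oo%E /\ dini_lower_right I f y = -oo%E).
Proof.
move=> nM.
have hN1 : forall N : R, N < `|N| + 1 by move=> N; have := ler_norm N; lra.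
have hN2 : forall N : R, - (`|N| + 1) < N by move=> N; have := ler_norm (- N); rewrite normrN; lra.
have M0 : forall N : R, 0 < `|N| + 1 by move=> N; have := normr_ge0 N; lra.
case: (step2 nM) => H; [left|right]; split.
- rewrite /dini_upper_right; apply: dini_sup_inf => d d0 N.
  have [x [z [_ [Iz [_ [hz hs]]]]]] := H d (`|N|+1) d0 (M0 N).
  exists z; first by split. case: hs => _ h; have := hN1 N; lra.
- rewrite /dini_lower_left; apply: dini_inf_sup => d d0 N.
  have [x [z [Ix [_ [hx [_ hs]]]]]] := H d (`|N|+1) d0 (M0 N).
  exists x; first by split. case: hs => h _; have := hN2 N; lra.
- rewrite /dini_upper_left; apply: dini_sup_inf => d d0 N.
  have [x [z [Ix [_ [hx [_ hs]]]]]] := H d (`|N|+1) d0 (M0 N).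
  exists x; first by split. case: hs => h _; have := hN1 N; lra.
- rewrite /dini_lower_right; apply: dini_inf_sup => d d0 N.
  have [x [z [_ [Iz [_ [hz hs]]]]]] := H d (`|N|+1) d0 (M0 N).
  exists z; first by split. case: hs => _ h; have := hN2 N; lra.
Qed.

Lemma part2 : is_interval I -> {within I, continuous f} -> I y ->
  dini_lower_left I f y = -oo%E -> dini_lower_right_ap I f y = +oo%E -> ~ Mpoint I f y.
Proof.
move=> iI cf Iy hl hap [c [eps [c1 [eps0 Hm]]]].
have : ((4*c)%:E < dini_lower_right_ap I f y)%E by rewrite hap ltry.
move/ereal_sup_gtP => [_ [t Ht <-]]; rewrite lte_fin => tc.
have [d0 d00 Hd] := @dens_half R _ Ht.
pose m := Num.min d0 eps.
have m0 : 0 < m by rewrite lt_min d00 eps0.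
have mle1 : m <= d0 by rewrite ge_min lexx.
have mle2 : m <= eps by rewrite ge_min lexx orbT.
have t0 : 0 < t by lra.
pose eta := t * m / 4.
have eta0 : 0 < eta by rewrite /eta divr_gt0 ?mulr_gt0.
have [r r0 Hr] := @cont_pt R I f y cf Iy _ eta0.
pose q := Num.min r eps.
have q0 : 0 < q by rewrite lt_min r0 eps0.
have qle1 : q <= r by rewrite ge_min lexx.
have qle2 : q <= eps by rewrite ge_min lexx orbT.
have : ereal_inf [set (dq f y x)%:E | x in lnbh I y q] = -oo%E.
  by move/ereal_sup_ninfty : hl; apply; exists q.
move/(lb_ereal_infNy_adherent (- (2 * c))) => [_ [x [Ix /andP[hx1 hx2]] <-]].
rewrite lte_fin /dq ltr_ndivrMr ?subr_lt0 // => hx.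
pose h := f x - f y.
have hpos : 2 * c * (y - x) < h by rewrite /h; lra.
have ux : 0 < y - x by lra.
have h0 : 0 < h by have := mulr_gt0 (mulr_gt0 (ltr0Sn _ 1) (lt_le_trans ltr01 c1)) ux; lra.
have heta : h < eta.
  have := Hr x Ix. rewrite distrC gtr0_norm // => /(_ ltac:(lra)).
  rewrite gtr0_norm //.
pose del := 2 * h / t.
have del0 : 0 < del by rewrite /del divr_gt0 // mulr_gt0.
have tdel : t * del = 2 * h by rewrite /del [t * _]mulrC divfK // gt_eqF.
have dlt : del < m / 2.
  have : t * del < t * (m / 2) by rewrite tdel; move: heta; rewrite /eta; lra.
  by rewrite ltr_pM2l.
have hD := Hd del del0 ltac:(lra).
set S := [set s | rnbh I y del s /\ t <= dq f y s].
have [s [[[Is /andP[hs1 hs2]] ts] sbig]] : exists s, S s /\ y + del / 2 < s.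
  apply: contrapT => nH.
  have sub : S `<=` [set` `]y, y + del / 2]].
    move=> s Ss; rewrite /= in_itv /=; case: (Ss) => -[_ /andP[-> _]] _ /=.
    by rewrite leNgt; apply/negP => lt; apply: nH; exists s.
  have := @leb_mono R _ _ sub; rewrite lebesgue_measure_itv /= lte_fin ltrDl.
  have -> : (0 < del / 2) = true by apply/idP; lra.
  rewrite -EFinD addrAC subrr add0r => le.
  have : ((del^-1)%:E * lebesgue_measure S <= (del^-1)%:E * (del/2)%:E)%E.
    by apply: lee_wpmul2l => //; rewrite lee_fin invr_ge0 ltW.
  rewrite -EFinM mulrA mulVf ?gt_eqF // mul1r => le2.
  by have := lt_le_trans hD le2; rewrite ?mul1r ltxx.
move: ts; rewrite /dq ler_pdivlMr ?subr_gt0 // => ts.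
have fs : f y + h <= f s.
  have : t * (del / 2) <= t * (s - y) by rewrite ler_pM2l //; lra.
  lra.
have Iys : `[y, s] `<=` I.
  move=> w; rewrite /= in_itv /= => hw; exact: (iI y s Iy Is w hw).
have cs : {within `[y, s], continuous f} by exact: continuous_subspaceW Iys cf.
have [z zin fz] : exists2 z, z \in `[y, s] & f z = f y + h.
  apply: IVT => //; first lra.
  rewrite ge_min le_max; apply/andP; split; apply/orP; [left|right]; lra.
move: (zin); rewrite in_itv /= => /andP[zy zs].
have zy' : y < z.
  rewrite lt_neqAle zy andbT; apply/negP => /eqP ey. move: fz; rewrite -ey. lra.
have Iz : I z by apply: Iys; rewrite /= in_itv /= zy zs.
have := Hm x z Ix ltac:(apply/andP; split; lra) Iz ltac:(apply/andP; split; lra).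
have g1 : h <= psidist f x y.
  have := @sqb_ge2 R (x - y) (f x - f y). by rewrite /h gtr0_norm.
have g2 : psidist f x z <= z - x.
  have := @sqb_le R (x - z) (f x - f z). rewrite /psidist fz /h.
  have -> : f x - (f y + (f x - f y)) = 0 by apply/eqP; rewrite subr_eq0 addrC subrK.
  rewrite normr0 addr0 distrC gtr0_norm; last lra. done.
move=> hM.
have c0 : 0 < c by lra.
have : h <= c * (z - x).
  apply: (le_trans g1); apply: (le_trans hM); rewrite ler_pM2l //.
have : c * (z - x) < c * (y - x) + c * del.
  rewrite -mulrDr ltr_pM2l //; lra.
have : (c * 4) * del < t * del by rewrite ltr_pM2r //; lra.
nra.
Qed.
End P1.

Theorem lemma3p1 (R : realType) (I : set R) (f : R -> R) (y : R) :
  is_interval I -> (exists a b : R, a < b /\ I a /\ I b) ->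
  {within I, continuous f} -> I y ->
  (~ Mpoint I f y ->
     (dini_upper_right I f y = +oo%E /\ dini_lower_left I f y = -oo%E) \/
     (dini_upper_left I f y = +oo%E /\ dini_lower_right I f y = -oo%E)) /\
  (dini_lower_left I f y = -oo%E -> dini_lower_right_ap I f y = +oo%E ->
     ~ Mpoint I f y).
Proof.
move=> iI _ cf Iy; split; first exact: part1.
exact: part2.
Qed.
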